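(* For every bracket pattern $w$, $A(w)=\bigcup_{w'\in\langle\!\langle w\rangle\!\rangle}w'$, and this set belongs to $\langle\!\langle w\rangle\!\rangle$.
   Context: $\mathbb N=\{1,2,\dots\}$, $\mathbb N_0=\mathbb N\cup\{0\}$. A bracket pattern is a non-empty finite subset $w\subseteq\mathbb N$; $\|w\|:=\max(w)$. For bracket patterns $w,w'$: superposition $w\cup w'$; for $j\in w$ the projection $\cap_j w:=\{i\in w\mid i\le j\}$; the dual $w^\dagger:=\{\|w\|-i\mid i\in\mathbb N_0,\ i<\|w\|,\ i\notin w\}$. A bracket pattern category is a set of bracket patterns closed under superposition, duals and projections; $\langle\!\langle w\rangle\!\rangle$ denotes the smallest bracket pattern category containing $w$. The completion of a bracket pattern $w$ is $A(w):=\{j-i\mid j\in w,\ i\in\mathbb N_0,\ i\notin w,\ i<j\}$. *)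

(* Defs.v *)
From mathcomp Require Import all_boot.
From mathcomp Require Export finmap.
Set Implicit Arguments. Unset Strict Implicit. Unset Printing Implicit Defensive.
Local Open Scope fset_scope.

Definition is_bp (w : {fset nat}) : bool := (w != fset0) && (0 \notin w).

Definition bnorm (w : {fset nat}) : nat := \max_(i <- w) i.

Definition bsup (w w' : {fset nat}) : {fset nat} := w `|` w'.

Definition bproj (j : nat) (w : {fset nat}) : {fset nat} :=
  [fset i in w | i <= j].

Definition bdual (w : {fset nat}) : {fset nat} :=
  [fset bnorm w - i | i in [seq i <- iota 0 (bnorm w) | i \notin w]].

Definition completion (w : {fset nat}) : {fset nat} :=
  [fset j - i | j in w, i in [seq i <- iota 0 j | i \notin w]].

Definition is_bp_category (C : {fset nat} -> Prop) : Prop :=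
  [/\ (forall w, C w -> is_bp w),
      (forall w w', C w -> C w' -> C (bsup w w')),
      (forall w, C w -> C (bdual w)) &
      (forall w j, C w -> j \in w -> C (bproj j w))].

(* <<w>>: the smallest bracket pattern category containing w
   (intersection of all bracket pattern categories containing w) *)
Definition generated (w : {fset nat}) (w' : {fset nat}) : Prop :=
  forall C, is_bp_category C -> C w -> C w'.

(* Main.v *)
Require Import Defs.
From mathcomp Require Import all_boot finmap zify.
Local Open Scope fset_scope.
Set Implicit Arguments. Unset Strict Implicit.

Lemma compP w x : reflect (exists j i, [/\ j \in w, i < j, i \notin w & x = j - i]) (x \in completion w).
Proof.
apply: (iffP (imfset2P _ _ _ _ _)).
- move=> [j jw [i]]; rewrite /= mem_filter mem_iota /= => /andP[iw ij] ->.
  by exists j, i; split.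
- move=> [j [i [jw ij iw ->]]]; exists j => //; exists i => //.
  by rewrite /= mem_filter mem_iota iw.
Qed.

Lemma dualP w x : reflect (exists i, [/\ i < bnorm w, i \notin w & x = bnorm w - i]) (x \in bdual w).
Proof.
apply: (iffP (imfsetP _ _ _ _)).
- move=> [i]; rewrite /= mem_filter mem_iota /= => /andP[iw ij] ->.
  by exists i; split.
- move=> [i [ij iw ->]]; exists i => //.
  by rewrite /= mem_filter mem_iota iw.
Qed.

Lemma projE j w x : (x \in bproj j w) = (x \in w) && (x <= j).
Proof. by rewrite /bproj !inE. Qed.

Lemma bnorm_ge w x : x \in w -> x <= bnorm w.
Proof. by move=> xw; rewrite /bnorm (leq_bigmax_seq _ xw). Qed.

Lemma seqmax_in (s : seq nat) : s != [::] -> \max_(i <- s) i \in s.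
Proof.
elim: s => [|a s IH] //= _.
rewrite big_cons; case: s IH => [|b s] IH.
  by rewrite big_nil maxn0 inE.
rewrite /maxn; case: ifP => _; first by rewrite in_cons IH ?orbT.
by rewrite in_cons eqxx.
Qed.

Lemma bnorm_in w : w != fset0 -> bnorm w \in w.
Proof.
move=> wn; case: (fset_0Vmem w) => [e|[x xw]]; first by rewrite e eqxx in wn.
have xs : x \in (w : seq nat) by [].
have : bnorm w \in (w : seq nat).
  by apply: seqmax_in; case: (w : seq nat) xs.
by [].
Qed.

Lemma neq0I (w : {fset nat}) x : x \in w -> w != fset0.
Proof. by move=> xw; apply/eqP => e; rewrite e in_fset0 in xw. Qed.

Lemma bp_sup a b : is_bp a -> is_bp b -> is_bp (bsup a b).
Proof.
move=> /andP[an a0] /andP[_ b0]; apply/andP; split.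
  have := bnorm_in an => h; apply: (@neq0I _ (bnorm a)); by rewrite in_fsetU h.
by rewrite in_fsetU negb_or a0 b0.
Qed.

Lemma bp_proj a j : is_bp a -> j \in a -> is_bp (bproj j a).
Proof.
move=> /andP[an a0] ja; apply/andP; split.
  by apply: (@neq0I _ j); rewrite projE ja leqnn.
by rewrite projE (negbTE a0).
Qed.

Lemma bnorm_pos a : is_bp a -> 0 < bnorm a.
Proof.
move=> /andP[an a0]; have h := bnorm_in an.
by case: (bnorm a) h a0 => // ->.
Qed.

Lemma bp_dual a : is_bp a -> is_bp (bdual a).
Proof.
move=> ab; have hp := bnorm_pos ab; move: ab => /andP[an a0]; apply/andP; split.
  apply: (@neq0I _ (bnorm a)); apply/dualP; exists 0; split => //.
  by rewrite subn0.
apply/dualP => -[i [ia _ e]]; move: e; lia.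
Qed.

Lemma w_sub_comp a x : is_bp a -> x \in a -> x \in completion a.
Proof.
move=> /andP[_ a0] xa; apply/compP; exists x, 0; split => //; last by rewrite subn0.
by case: x xa a0 => // ->.
Qed.

Lemma comp_sup a b x : x \in completion (bsup a b) -> (x \in completion a) || (x \in completion b).
Proof.
move=> /compP [j [i [ja ij ia ->]]]; move: ja ia; rewrite /bsup !in_fsetU negb_or.
move=> /orP[ja|jb] /andP[ia ib].
  by apply/orP; left; apply/compP; exists j, i.
by apply/orP; right; apply/compP; exists j, i.
Qed.

Lemma comp_proj a k x : x \in completion (bproj k a) -> x \in completion a.
Proof.
move=> /compP [j [i [ja ij ia ->]]]; move: ja ia; rewrite !projE => /andP[ja jk].
have -> : i <= k by apply: ltnW; apply: leq_trans ij jk.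
rewrite andbT => ia; by apply/compP; exists j, i.
Qed.

Lemma comp_dual a x : is_bp a -> x \in completion (bdual a) -> x \in completion a.
Proof.
move=> ab /compP [j [i [/dualP [k [km ka ->]] ij id ->]]].
apply/compP.
have ilt : i < bnorm a by lia.
have ka' : bnorm a - i \in a.
  case: (boolP (bnorm a - i \in a)) => // H; exfalso.
  case: i ij id ilt H => [|i] ij id ilt H.
    by move: H; rewrite subn0 bnorm_in //; case/andP: ab.
  move/negP: id; apply.
  apply/dualP; exists (bnorm a - i.+1); split => //; lia.
exists (bnorm a - i), k; split => //; lia.
Qed.

Lemma bnorm_proj w j : is_bp w -> j \in w -> bnorm (bproj j w) = j.
Proof.
move=> wb jw; have /andP[pn _] := bp_proj wb jw.
apply/eqP; rewrite eqn_leq; apply/andP; split.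
  by have := bnorm_in pn; rewrite projE => /andP[].
by apply: bnorm_ge; rewrite projE jw leqnn.
Qed.

Definition D w j := bdual (bproj j w).

Lemma DP w j x : is_bp w -> j \in w ->
  reflect (exists i, [/\ i < j, i \notin w & x = j - i]) (x \in D w j).
Proof.
move=> wb jw; rewrite /D; apply: (iffP (dualP _ _)); rewrite bnorm_proj //.
  move=> [i [ij iw ->]]; exists i; split => //.
  by move: iw; rewrite projE ltnW // andbT.
move=> [i [ij iw ->]]; exists i; split => //.
by rewrite projE negb_and iw.
Qed.

Definition F w j0 (s : seq nat) := foldr (fun j acc => bsup (D w j) acc) (D w j0) s.

Lemma FE w j0 s x : (x \in F w j0 s) = (x \in D w j0) || has (fun j => x \in D w j) s.
Proof.
elim: s => [|a s IH] /=; first by rewrite orbF.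
by rewrite /bsup in_fsetU IH orbCA.
Qed.

Unset Implicit Arguments.
Theorem lemma7p8 (w : {fset nat}) :
  is_bp w ->
  (forall x : nat, x \in completion w <-> exists w', generated w w' /\ x \in w')
  /\ generated w (completion w).
Proof.
move=> wb.
have gen2 : generated w (completion w).
  move=> C [Cbp Csup Cdual Cproj] Cw.
  have j0w : bnorm w \in w by apply: bnorm_in; case/andP: wb.
  have CD : forall j, j \in w -> C (D w j).
    by move=> j jw; apply: Cdual; apply: Cproj.
  have CF : forall s : seq nat, {subset s <= w} -> C (F w (bnorm w) s).
    elim => [|a s IH] sub /=; first by apply: CD.
    apply: Csup; first by apply: CD; apply: sub; rewrite in_cons eqxx.
    by apply: IH => y ys; apply: sub; rewrite in_cons ys orbT.
  have -> : completion w = F w (bnorm w) (w : seq nat).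
    apply/fsetP => x; rewrite FE.
    apply/idP/idP.
      move=> /compP [j [i [jw ij iw ->]]].
      apply/orP; right; apply/hasP; exists j => //.
      by apply/DP => //; exists i.
    move=> /orP [H|/hasP [j jw H]].
      by move/DP: H => /(_ wb j0w) [i [ij iw ->]]; apply/compP; exists (bnorm w), i.
    by move/DP: H => /(_ wb jw) [i [ij iw ->]]; apply/compP; exists j, i.
  by apply: CF.
split=> // x; split.
  by move=> xc; exists (completion w); split.
move=> [w' [g xw']].
pose C0 := fun v => is_bp v /\ forall y, y \in completion v -> y \in completion w.
have : C0 w' .
  apply: g.
    split.
    - by move=> v [].
    - move=> a b [ab Ha] [bb Hb]; split; first exact: bp_sup.
      by move=> y /comp_sup /orP [/Ha|/Hb].
    - move=> a [ab Ha]; split; first exact: bp_dual.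
      by move=> y /(comp_dual ab) /Ha.
    - move=> a j [ab Ha] ja; split; first exact: bp_proj.
      by move=> y /comp_proj /Ha.
  by split.
move=> [bw' H]; apply: H; exact: w_sub_comp.
Qed.
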